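(* Let $G$ be an arbitrary connected graph on $n$ vertices, let $0<p<\frac{1}{2}$ be a noise parameter and let $0<\delta<\frac{1}{2}$ be a confidence threshold. There exists an adaptive graph searching algorithm (in the noisy graph search model described in the context, with an adversarially fixed target) that, after $$\frac{1}{I(p)}\left(\log_2 n + \mathcal{O}\big(\sqrt{\log n \log \delta^{-1}}\big) + \mathcal{O}(\log \delta^{-1})\right)$$ queries, returns the target correctly with probability at least $1-\delta$, for every choice of the target.
   Context: Noisy graph search model: $G=(V,E)$ is an undirected, unweighted connected graph and $v^*\in V$ is an unknown target. In each step the algorithm queries a vertex $q$. A correct answer is ''yes'' if $q=v^*$, and otherwise is a neighbor $u$ of $q$ lying on a shortest path from $q$ to $v^*$. Each answer, independently, is erroneous with probability $p$ (in which case it may be an arbitrary different answer); otherwise it is correct. The algorithm is adaptive (queries may depend on previous answers). In the adversarial model the target is fixed before the search by an adversary who knows the algorithm. $H(p)=-p\log_2 p-(1-p)\log_2(1-p)$ and $I(p)=1-H(p)$. *)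

(* Defs.v *)
From Stdlib Require Import Reals.
From mathcomp Require Import all_boot all_order all_algebra.
From mathcomp Require Import Rstruct.

Set Implicit Arguments.
Unset Strict Implicit.
Unset Printing Implicit Defensive.

Section NoisyGraphSearch.
Variables (V : finType) (e : rel V).

Definition connected_graph : Prop := forall u v : V, connect e u v.

Fixpoint ball (k : nat) (u : V) : {set V} :=
  match k with
  | 0 => [set u]
  | k'.+1 => ball k' u :|: [set y | [exists x in ball k' u, e x y]]
  end.

(* shortest-path (hop) distance; equals #|V| if v is unreachable from u *)
Definition dist (u v : V) : nat := find (fun k => v \in ball k u) (iota 0 #|V|).

(* An answer is None ("yes") or Some u (the neighbour u). *)
Definition answer := option V.

Definition admissible (q : V) (a : answer) : bool :=
  if a is Some u then e q u else true.

Definition correct (t q : V) (a : answer) : bool :=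
  if q == t then a == None
  else if a is Some u then e q u && (dist u t + 1 == dist q t) else false.

(* history of (query, answer) pairs, oldest first *)
Definition history := seq (V * answer).

Record algorithm := Algorithm {
  alg_query : history -> V;
  alg_out : history -> V }.

(* The adversary, knowing the algorithm and the previous error coins and the
   history, chooses (i) which correct answer is given when the answer is correct
   ([cor]) and (ii) which different answer is given when the answer is
   erroneous ([lie]). *)
Definition valid_adversary (t : V)
    (cor lie : seq bool -> history -> V -> answer) : Prop :=
  forall (bs : seq bool) (h : history) (q : V),
    correct t q (cor bs h q) /\ admissible q (lie bs h q) /\
    lie bs h q <> cor bs h q.

(* Run the algorithm on the error-coin sequence bs (true = erroneous answer). *)
Fixpoint run_aux (A : algorithm) (cor lie : seq bool -> history -> V -> answer)
    (bs : seq bool) (prev : seq bool) (h : history) : history :=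
  match bs with
  | [::] => h
  | b :: bs' =>
      let q := alg_query A h in
      let a := if b then lie prev h q else cor prev h q in
      run_aux A cor lie bs' (rcons prev b) (rcons h (q, a))
  end.

Definition run A cor lie (bs : seq bool) : history := run_aux A cor lie bs [::] [::].

Local Open Scope ring_scope.

Definition success_prob (p : R) (T : nat) (A : algorithm)
    (cor lie : seq bool -> history -> V -> answer) (t : V) : R :=
  \sum_(bs : T.-tuple bool)
     (\prod_(i < T) (if tnth bs i then p else 1 - p)) *
     (alg_out A (run A cor lie bs) == t)%:R.

End NoisyGraphSearch.

Local Open Scope R_scope.

Definition log2 (x : R) : R := ln x / ln 2.
Definition Hbin (p : R) : R := - p * log2 p - (1 - p) * log2 (1 - p).
Definition Icap (p : R) : R := 1 - Hbin p.

(* Main.v *)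
Require Import Defs.
From Stdlib Require Import Reals Lra Psatz ZArith Lia.
From mathcomp Require Import all_boot all_order all_algebra.
From mathcomp Require Import Rstruct.
From mathcomp Require Import ring lra.
Ltac mlra := lra.
Ltac mring := ring.
From Stdlib Require Import Ring Field.
Import Stdlib.setoid_ring.Ring_tac Stdlib.setoid_ring.Field_tac.
Set Implicit Arguments. Unset Strict Implicit. Unset Printing Implicit Defensive.
Module M1.
Local Open Scope R_scope.

Fixpoint Esum (p : R) (m : nat) (g : seq bool -> R) : R :=
  match m with
  | 0 => g [::]
  | m'.+1 => (1 - p) * Esum p m' (fun s => g (false :: s))
             + p * Esum p m' (fun s => g (true :: s))
  end.

Lemma tuple_sum p m (g : seq bool -> R) :
  (\sum_(bs : m.-tuple bool)
     (\prod_(i < m) (if tnth bs i then p else 1 - p)) * g bs)%R = Esum p m g.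
Proof.
elim: m g => [|m IH] g /=.
  rewrite (eq_bigr (fun _ => g [::])); last first.
    by move=> t _; rewrite (tuple0 t) big_ord0 GRing.mul1r.
  by rewrite big_const card_tuple /= GRing.addr0.
pose h := fun bt : bool * m.-tuple bool => [tuple of bt.1 :: bt.2].
have hb : bijective h.
  exists (fun t : m.+1.-tuple bool => (thead t, [tuple of behead t])).
    by case=> b t; congr pair; apply: val_inj.
  by move=> t; rewrite /h /=; apply: val_inj => /=; case: t => [[|x s] //].
rewrite (reindex h) /=; last by apply: onW_bij.
rewrite -(pair_big xpredT xpredT (fun b (t : m.-tuple bool) =>
   ((\prod_(i < m.+1) (if tnth (h (b, t)) i then p else 1 - p)) * g (h (b, t)))%R)) /=.
rewrite big_bool /= -!IH RplusE GRing.addrC.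
congr (_ + _)%R; rewrite big_distrr; apply: eq_bigr => t _;
  rewrite big_ord_recl /= -GRing.mulrA;
  congr (_ * (_ * _))%R; apply: eq_bigr => i _; by rewrite tnthS.
Qed.

End M1.
Import M1.


Section Graph.
Variables (V : finType) (e : rel V).
Hypothesis esym : symmetric e.

Lemma ball_mono k u : Defs.ball e k u \subset Defs.ball e k.+1 u.
Proof. by rewrite /= subsetUl. Qed.

Lemma ball_step k u q v : e u q -> v \in Defs.ball e k q -> v \in Defs.ball e k.+1 u.
Proof.
move=> euq; elim: k v => [|k IH] v /=.
  rewrite in_set1 => /eqP ->; apply/setUP; right; rewrite inE.
  by apply/existsP; exists u; rewrite in_set1 eqxx euq.
case/setUP => [vk|].
  by apply/setUP; left; exact: IH.
rewrite inE => /existsP [x /andP [xk exv]].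
apply/setUP; right; rewrite inE; apply/existsP; exists x.
by rewrite IH.
Qed.

Lemma dist_le k u v : v \in Defs.ball e k u -> (Defs.dist e u v <= k)%N.
Proof.
move=> vk; rewrite /Defs.dist.
case: (ltnP k #|V|) => hk.
  apply: contraTT vk; rewrite -ltnNge => lt.
  have := before_find 0%N lt; rewrite nth_iota //= add0n => ->. done.
by apply: leq_trans (find_size _ _) _; rewrite size_iota.
Qed.

Lemma dist_in u v : (Defs.dist e u v < #|V|)%N -> v \in Defs.ball e (Defs.dist e u v) u.
Proof.
rewrite /Defs.dist => lt.
have hs : has (fun k => v \in Defs.ball e k u) (iota 0 #|V|).
  by rewrite has_find size_iota.
by have := nth_find 0%N hs; rewrite nth_iota ?add0n.
Qed.

Lemma dist_size u v : (Defs.dist e u v <= #|V|)%N.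
Proof. by rewrite /Defs.dist; apply: leq_trans (find_size _ _) _; rewrite size_iota. Qed.

Lemma dist_adj u q v : e q u -> (Defs.dist e u v <= (Defs.dist e q v).+1)%N.
Proof.
move=> equ.
case: (ltnP (Defs.dist e q v) #|V|) => hq.
  by apply: dist_le; apply: (ball_step (q:=q)); [rewrite esym | exact: dist_in].
by apply: leq_trans (dist_size _ _) _; apply: leq_trans hq _.
Qed.
End Graph.

Module M4.
Import Order.TTheory GRing.Theory Num.Theory.

Section Weights.
Variables (V : finType) (e : rel V).
Hypothesis esym : symmetric e.
Variable (p : R) (v0 : V).
Hypothesis p0 : (0 < p)%R.
Hypothesis p1 : (p < 1)%R.
Local Open Scope ring_scope.

Definition wt (h : history V) (v : V) : R :=
  \prod_(x <- h) (if correct e v x.1 x.2 then 1 - p else p).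
Definition Wt h := \sum_v wt h v.
Definition Phi h (q : V) := \sum_v wt h v * (Defs.dist e q v)%:R.
Definition query h := Order.arg_min v0 xpredT (Phi h).
Definition outv h := Order.arg_max v0 xpredT (wt h).

Lemma wt_gt0 h v : 0 < wt h v.
Proof. apply: prodr_gt0 => x _; by case: ifP => _; rewrite ?subr_gt0. Qed.

Lemma median h u :
  (\sum_(v | correct e v (query h) (Some u)) wt h v) * 2 <= Wt h.
Proof.
set q := query h.
case equ: (e q u); last first.
  rewrite big_pred0; last by move=> v; rewrite /correct equ; case: ifP.
  rewrite mul0r; apply: sumr_ge0 => v _; exact: ltW (wt_gt0 h v).
have : Phi h q <= Phi h u.
  by rewrite /q /query; case: arg_minP => // i _; apply.
set C := fun v => correct e v q (Some u).
have key : Phi h u <= Phi h q + \sum_v wt h v * (if C v then -1 else 1).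
  rewrite /Phi -big_split /=; apply: ler_sum => v _.
  rewrite -mulrDr; apply: ler_wpM2l; first exact: ltW (wt_gt0 h v).
  rewrite /C /correct; case: eqP => [qv|qv].
    by rewrite /= natr1 ler_nat (dist_adj esym).
  case: andP => [[_ /eqP <-]|_].
    by rewrite natrD addrK.
  by rewrite natr1 ler_nat (dist_adj esym).
move=> le.
have : Phi h u <= Phi h u + \sum_v wt h v * (if C v then -1 else 1).
  by apply: (le_trans key); rewrite lerD2r.
rewrite lerDl (bigID C) /= => H.
have -> : Wt h = \sum_(v | C v) wt h v + \sum_(v | ~~ C v) wt h v by rewrite /Wt (bigID C).
move: H; rewrite (eq_bigr (fun v => - wt h v)); last by move=> v ->; rewrite mulrN1.
rewrite [X in _ + X](eq_bigr (fun v => wt h v)); last by move=> v /negbTE ->; rewrite mulr1.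
rewrite sumrN; mlra.
Qed.
End Weights.

End M4.
Import M4.

Module M5.
Unset Implicit Arguments.
Local Open Scope R_scope.

Lemma exp_le x y : x <= y -> exp x <= exp y.
Proof. intros [H|H]; [left; now apply exp_increasing | subst; Lra.lra]. Qed.

Lemma ln_le_sub1 x : 0 < x -> ln x <= x - 1.
Proof. intros Hx. pose proof (exp_ineq1_le (ln x)). rewrite exp_ln in H; [Lra.lra|Lra.lra]. Qed.

Lemma ln_ge_1_inv x : 0 < x -> 1 - / x <= ln x.
Proof.
intros Hx. pose proof (ln_le_sub1 (/ x) (Rinv_0_lt_compat _ Hx)).
rewrite ln_Rinv in H; [Lra.lra|Lra.lra].
Qed.

Lemma bern x t : 0 < x -> 0 <= t <= 1 -> Rpower x t <= 1 + t * (x - 1).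
Proof.
intros Hx Ht. unfold Rpower.
set (m := 1 + t * (x - 1)).
assert (Hm : 0 < m).
{ unfold m. destruct (Req_dec t 1) as [->|Ht1]; [Lra.lra|].
  assert (0 <= t * x) by (apply Rmult_le_pos; Lra.lra). Lra.lra. }
rewrite -(exp_ln m Hm). apply exp_le.
assert (H1 := ln_le_sub1 (x / m) (Rdiv_lt_0_compat _ _ Hx Hm)).
assert (H2 := ln_le_sub1 (/ m) (Rinv_0_lt_compat _ Hm)).
unfold Rdiv in H1. rewrite ln_mult in H1; [| Lra.lra | apply Rinv_0_lt_compat; Lra.lra].
rewrite ln_Rinv in H1; [|Lra.lra]. rewrite ln_Rinv in H2; [|Lra.lra].
assert (E : t * (x * / m - 1) + (1 - t) * (/ m - 1) = 0).
{ unfold m in *. field. Lra.lra. }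
assert (t * (ln x + - ln m) <= t * (x * / m - 1)) by (apply Rmult_le_compat_l; Lra.lra).
assert ((1 - t) * (- ln m) <= (1 - t) * (/ m - 1)) by (apply Rmult_le_compat_l; Lra.lra).
Psatz.nra.
Qed.

Definition rho p t := (1-p) * Rpower (2 * (1-p)) (-t) + p * Rpower (2 * p) (-t).

Lemma Rpower_div_split x y t : 0 < x -> 0 < y ->
  Rpower (x / y) t = Rpower (2 * x) t * Rpower (2 * y) (- t).
Proof.
intros Hx Hy. unfold Rpower. rewrite -exp_plus. f_equal.
replace (x / y) with ((2 * x) * / (2 * y)) by (field; Lra.lra).
rewrite ln_mult; [| Lra.lra | apply Rinv_0_lt_compat; Lra.lra].
rewrite ln_Rinv; [ring|Lra.lra].
Qed.

Lemma half_exp x : 0 < x -> x = / 2 * exp (ln (2 * x)).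
Proof. intros Hx. rewrite exp_ln; [field|Lra.lra]. Qed.

Lemma step_num p t A B : 0 < p < 1/2 -> 0 < t <= 1 -> 0 < A <= 1/2 -> 0 < B <= 1 - A ->
  (1-p) * Rpower (A/(1-p)) t + p * Rpower (B/p) t <= rho p t.
Proof.
intros Hp Ht HA HB. unfold rho.
assert (HB' : Rpower (B/p) t <= Rpower ((1-A)/p) t).
{ apply Rle_Rpower_l; [Lra.lra|]. split; [apply Rdiv_lt_0_compat; Lra.lra|].
  unfold Rdiv; apply Rmult_le_compat_r; [left; apply Rinv_0_lt_compat|]; Lra.lra. }
rewrite (Rpower_div_split (1-A) p t) in HB'; [|Lra.lra|Lra.lra].
rewrite (Rpower_div_split A (1-p) t); [|Lra.lra|Lra.lra].
set (a := Rpower (2 * (1 - p)) (- t)) in *.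
set (b := Rpower (2 * p) (- t)) in *.
assert (Ha : 0 < a) by (unfold a, Rpower; apply exp_pos).
assert (Hb : 0 < b) by (unfold b, Rpower; apply exp_pos).
assert (X1 := bern (2 * A) t ltac:(Lra.lra) ltac:(Lra.lra)).
assert (X2 := bern (2 * (1 - A)) t ltac:(Lra.lra) ltac:(Lra.lra)).
assert (P1 : 0 <= Rpower (2 * A) t) by (unfold Rpower; left; apply exp_pos).
assert (P2 : 0 <= Rpower (2 * (1 - A)) t) by (unfold Rpower; left; apply exp_pos).
assert (Hab : p * b <= (1 - p) * a).
{ assert (Ep : p * b = / 2 * exp ((1 - t) * ln (2 * p))).
  { unfold b, Rpower. rewrite {1}(half_exp p); [|Lra.lra].
    rewrite Rmult_assoc -exp_plus. f_equal. f_equal. ring. }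
  assert (Eq : (1 - p) * a = / 2 * exp ((1 - t) * ln (2 * (1 - p)))).
  { unfold a, Rpower. rewrite {1}(half_exp (1 - p)); [|Lra.lra].
    rewrite Rmult_assoc -exp_plus. f_equal. f_equal. ring. }
  rewrite Ep Eq.
  apply Rmult_le_compat_l; [Lra.lra|]. apply exp_le.
  assert (ln (2 * p) <= ln (2 * (1 - p))) by (left; apply ln_increasing; Lra.lra).
  assert ((1 - t) * ln (2 * p) <= (1 - t) * ln (2 * (1 - p))) by (apply Rmult_le_compat_l; Lra.lra).
  Lra.lra. }
assert (E1 : (1 - p) * (Rpower (2 * A) t * a) <= (1 - p) * a * (1 + t * (2 * A - 1))).
{ rewrite (Rmult_comm (Rpower _ _) a) -Rmult_assoc. apply Rmult_le_compat_l; [|Lra.lra].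
  apply Rmult_le_pos; Lra.lra. }
assert (E2 : p * Rpower (B / p) t <= p * b * (1 + t * (2 * (1 - A) - 1))).
{ apply Rle_trans with (p * (Rpower (2 * (1 - A)) t * b)).
  apply Rmult_le_compat_l; [Lra.lra| exact HB'].
  rewrite (Rmult_comm (Rpower _ _) b) -Rmult_assoc. apply Rmult_le_compat_l; [|Lra.lra].
  apply Rmult_le_pos; Lra.lra. }
assert (t * (1 - 2 * A) * ((1 - p) * a - p * b) >= 0).
{ apply Rle_ge, Rmult_le_pos; [apply Rmult_le_pos|]; Lra.lra. }
Psatz.nra.
Qed.

Definition Inat p := (1-p) * ln (2 * (1-p)) + p * ln (2 * p).

Lemma pinsker p : 0 < p < 1/2 -> (1 - 2 * p) * (1 - 2 * p) / 4 <= Inat p.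
Proof.
intros Hp. unfold Inat.
set (a := sqrt (2 * (1 - p))). set (b := sqrt (2 * p)).
assert (Ha : 0 < a) by (apply sqrt_lt_R0; Lra.lra).
assert (Hb : 0 < b) by (apply sqrt_lt_R0; Lra.lra).
assert (Ea : a * a = 2 * (1 - p)) by (apply sqrt_sqrt; Lra.lra).
assert (Eb : b * b = 2 * p) by (apply sqrt_sqrt; Lra.lra).
rewrite -Ea -Eb. rewrite (ln_mult a a Ha Ha) (ln_mult b b Hb Hb).
assert (La := ln_ge_1_inv a Ha). assert (Lb := ln_ge_1_inv b Hb).
assert (Ia : a * / a = 1) by (field; Lra.lra).
assert (Ib : b * / b = 1) by (field; Lra.lra).
assert (H1 : (1 - p) * (ln a + ln a) >= (1 - p) * 2 * (1 - / a)) by Psatz.nra.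
assert (H2 : p * (ln b + ln b) >= p * 2 * (1 - / b)) by Psatz.nra.
assert (H3 : (1 - p) * 2 * (1 - / a) + p * 2 * (1 - / b) = 2 - a - b).
{ replace ((1 - p) * 2) with (a * a) by Lra.lra. replace (p * 2) with (b * b) by Lra.lra.
  replace (a * a * (1 - / a)) with (a * a - a) by (field; Lra.lra).
  replace (b * b * (1 - / b)) with (b * b - b) by (field; Lra.lra). Lra.lra. }
set (d := 1 - 2 * p).
assert (Hab : a * b <= 1 - d * d / 2).
{ assert (E : (a * b) * (a * b) = 1 - d * d) by (unfold d; Psatz.nra).
  assert (0 <= 1 - d * d / 2) by (unfold d; Psatz.nra).
  Psatz.nra. }
assert (Hs : (a + b) * (a + b) <= (2 - d * d / 4) * (2 - d * d / 4)) by Psatz.nra.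
assert (0 <= 2 - d * d / 4) by (unfold d; Psatz.nra).
assert (a + b <= 2 - d * d / 4) by Psatz.nra.
replace (1 - b * b) with d by (unfold d; Lra.lra). Lra.lra.
Qed.

Lemma expm_le y : 0 <= y -> exp (- y) <= 1 - y + y * y.
Proof.
intros Hy. rewrite exp_Ropp. pose proof (exp_ineq1_le y).
assert (0 < exp y) by apply exp_pos.
apply Rle_trans with (/ (1 + y)).
- apply Rinv_le_contravar; Lra.lra.
- apply Rmult_le_reg_l with (1 + y); [Lra.lra|]. rewrite Rinv_r; [Psatz.nra|Lra.lra].
Qed.

Lemma expp_le s : 0 <= s -> exp s <= 1 + s + s * s * exp s.
Proof.
intros Hs. pose proof (exp_ineq1_le (- s)).
assert (E : exp (- s) * exp s = 1) by (rewrite exp_Ropp; field; apply exp_neq_0).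
assert (0 < exp s) by apply exp_pos.
assert ((1 + s) * exp (- s) >= (1 + s) * (1 - s)) by Psatz.nra.
Psatz.nra.
Qed.

Lemma tailterm p t : 0 < p < 1/2 -> 0 <= t <= 1/2 ->
  p * (ln (2 * p) * ln (2 * p)) * exp (- (t * ln (2 * p))) <= 8 * ((1 - 2 * p) * (1 - 2 * p)).
Proof.
intros Hp Ht.
set (L := ln (2 * p)).
assert (HL : L < 0) by (unfold L; rewrite -ln_1; apply ln_increasing; Lra.lra).
set (r := exp (L / 4)).
assert (Hr : 0 < r) by apply exp_pos.
assert (E4 : r * r * r * r = 2 * p).
{ unfold r. rewrite -!exp_plus. replace (L/4 + L/4 + L/4 + L/4) with L by field.
  unfold L. apply exp_ln. Lra.lra. }
assert (Hr1 : r < 1) by (unfold r; rewrite -exp_0; apply exp_increasing; Lra.lra).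
assert (Lr : ln r = L / 4) by (unfold r; apply ln_exp).
set (u := / r).
assert (Hu : r * u = 1) by (unfold u; field; Lra.lra).
assert (Hu1 : - (L/4) <= u - 1).
{ pose proof (ln_le_sub1 u ltac:(unfold u; apply Rinv_0_lt_compat; Lra.lra)).
  unfold u in H. rewrite ln_Rinv in H; [|Lra.lra]. fold u in H. Lra.lra. }
assert (X1 : exp (- (t * L)) <= exp (- (L / 2))).
{ apply exp_le. assert (t * L >= 1/2 * L) by Psatz.nra. Lra.lra. }
assert (X2 : exp (- (L / 2)) = u * u).
{ unfold u, r. rewrite -!exp_Ropp -exp_plus. f_equal. field. }
assert (X3 : L * L <= 16 * ((u - 1) * (u - 1))).
{ assert (0 <= - (L/4)) by Lra.lra. Psatz.nra. }
assert (0 < exp (- (t * L))) by apply exp_pos.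
assert (K : p * (L * L) * exp (- (t * L)) <= p * (16 * ((u - 1) * (u - 1))) * (u * u)).
{ apply Rle_trans with (p * (16 * ((u - 1) * (u - 1))) * exp (- (t * L))).
  - apply Rmult_le_compat_r; [Lra.lra|]. apply Rmult_le_compat_l; Lra.lra.
  - apply Rmult_le_compat_l; [|Lra.lra]. apply Rmult_le_pos; [Lra.lra|]. Psatz.nra. }
assert (K2 : p * (16 * ((u - 1) * (u - 1))) * (u * u) = 8 * ((1 - r) * (1 - r))).
{ replace p with (r * r * r * r / 2) by Lra.lra.
  replace (1 - r) with (r * (u - 1)) by (rewrite Rmult_minus_distr_l Hu; ring).
  unfold u. field. Lra.lra. }
assert (r * r * r * r <= r).
{ assert (r * r <= 1) by Psatz.nra. assert (r * r * r <= 1) by Psatz.nra. Psatz.nra. }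
assert (0 <= 1 - r) by Lra.lra.
assert ((1 - r) * (1 - r) <= (1 - 2 * p) * (1 - 2 * p)) by Psatz.nra.
Lra.lra.
Qed.

Lemma rho_bound p t : 0 < p < 1/2 -> 0 < t <= 1/2 ->
  rho p t <= 1 - t * Inat p + 36 * (t * t) * Inat p.
Proof.
intros Hp Ht. unfold rho, Rpower.
set (L1 := ln (2 * (1 - p))). set (L2 := ln (2 * p)).
assert (HL1 : 0 <= L1).
{ unfold L1. rewrite -ln_1. destruct (Req_dec p (1/2)); [Lra.lra|].
  left; apply ln_increasing; Lra.lra. }
assert (HL1' : L1 <= 1 - 2 * p) by (unfold L1; pose proof (ln_le_sub1 (2 * (1 - p))); Lra.lra).
assert (HL2 : L2 < 0) by (unfold L2; rewrite -ln_1; apply ln_increasing; Lra.lra).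
replace (- t * L1) with (- (t * L1)) by ring.
replace (- t * L2) with (t * - L2) by ring.
assert (A1 := expm_le (t * L1) ltac:(apply Rmult_le_pos; Lra.lra)).
assert (A2 := expp_le (t * - L2) ltac:(apply Rmult_le_pos; Lra.lra)).
assert (T := tailterm p t Hp ltac:(Lra.lra)). fold L2 in T.
replace (- (t * L2)) with (t * - L2) in T by ring.
assert (P := pinsker p Hp).
assert (B1 : (1 - p) * (L1 * L1) <= (1 - 2 * p) * (1 - 2 * p)).
{ assert (L1 * L1 <= (1 - 2 * p) * (1 - 2 * p)) by Psatz.nra.
  assert (0 <= L1 * L1) by Psatz.nra. Psatz.nra. }
set (E := exp (t * - L2)) in *.
assert (Q : (1 - p) * exp (- (t * L1)) + p * E <=
   1 - t * ((1 - p) * L1 + p * L2) + (t * t) * ((1 - p) * (L1 * L1) + p * (L2 * L2) * E)).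
{ assert ((1 - p) * exp (- (t * L1)) <= (1 - p) * (1 - t * L1 + t * L1 * (t * L1)))
    by (apply Rmult_le_compat_l; Lra.lra).
  assert (p * E <= p * (1 + t * - L2 + t * - L2 * (t * - L2) * E))
    by (apply Rmult_le_compat_l; Lra.lra).
  Psatz.nra. }
unfold Inat. fold L1 L2.
assert (t * t * ((1 - p) * (L1 * L1) + p * (L2 * L2) * E) <= t * t * (9 * ((1 - 2 * p) * (1 - 2 * p)))).
{ apply Rmult_le_compat_l; [Psatz.nra|]. Lra.lra. }
unfold Inat in P. fold L1 L2 in P.
assert (t * t * (9 * ((1 - 2 * p) * (1 - 2 * p))) <= 36 * (t * t) * ((1 - p) * L1 + p * L2)) by Psatz.nra.
Lra.lra.
Qed.

Set Implicit Arguments.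
End M5.
Import M5.

Module M6.
Import Order.TTheory GRing.Theory Num.Theory.

Section Step.
Variables (V : finType) (e : rel V).
Hypothesis esym : symmetric e.
Variable (p : R) (v0 : V).
Hypothesis p0 : (0 < p)%R.
Hypothesis p1 : (p < 1)%R.
Local Open Scope ring_scope.

Lemma sum_sub (P Q : pred V) (F : V -> R) : (forall v, 0 <= F v) ->
  (forall v, P v -> Q v) -> \sum_(v | P v) F v <= \sum_(v | Q v) F v.
Proof.
move=> F0 PQ; rewrite [X in X <= _]big_mkcond [X in _ <= X]big_mkcond /=.
apply: ler_sum => v _; case: ifP => Pv; first by rewrite PQ.
by case: ifP.
Qed.

Variable h : history V.
Variable t : V.
Let w := wt e p h.
Let q := query e p v0 h.
Definition Yt := \sum_(v | v != t) w v.
Definition Xa a := \sum_(v | (v != t) && correct e v q a) w v.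

Lemma w0 v : 0 <= w v. Proof. exact: ltW (wt_gt0 e p0 p1 _ _). Qed.

Lemma W_split : Wt e p h = Yt + w t.
Proof. by rewrite /Wt (bigD1 t) //= addrC. Qed.

Lemma X_le_Y a : Xa a <= Yt.
Proof. by apply: sum_sub => [v|v /andP []//]; apply: w0. Qed.

Lemma correct_None v : correct e v q None = (q == v).
Proof. by rewrite /correct; case: ifP. Qed.

Lemma Xfacts c l : correct e t q c -> Xa c * 2 <= Yt /\ Xa c + Xa l <= Yt.
Proof.
case: c => [u|] /=; last first.
  rewrite /correct; case: eqP => // qt _.
  have -> : Xa None = 0.
    rewrite /Xa big_pred0 // => v; rewrite correct_None qt eq_sym.
    by case: eqP.
  by rewrite mul0r add0r; split; [apply: sumr_ge0 => v _; apply: w0 | apply: X_le_Y].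
move=> ct.
have qt : q != t by move: ct; rewrite /correct; case: eqP.
have med := median esym v0 p0 p1 h u.
rewrite -/q -/w (bigD1 t) //= in med.
have EX : Xa (Some u) = \sum_(v | correct e v q (Some u) && (v != t)) w v.
  by apply: eq_bigl => v; rewrite andbC.
rewrite -EX in med.
have WS := W_split.
have X0 : forall a, 0 <= Xa a by move=> a; apply: sumr_ge0 => v _; apply: w0.
have wt0 := w0 t; split; first by mlra.
case: l => [u'|].
  have := median esym v0 p0 p1 h u'; rewrite -/q -/w => med'.
  have : Xa (Some u') <= \sum_(v | correct e v q (Some u')) w v.
    by apply: sum_sub => [v|v /andP []//]; apply: w0.
  by mlra.
have -> : Xa None = w q.
  rewrite /Xa (bigD1 q) /=; last by rewrite qt correct_None eqxx.
  rewrite big_pred0 ?addr0 // => v; rewrite correct_None.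
  by case: (q =P v) => [->|]; rewrite ?eqxx ?andbF.
have : Xa (Some u) + w q = \sum_(v | (v != t) && (correct e v q (Some u) || (v == q))) w v.
  rewrite [RHS](bigD1 q) /=; last by rewrite qt eqxx orbT.
  rewrite addrC; congr (_ + _); apply: eq_bigl => v.
  case: (eqVneq v q) => [->|vq]; first by rewrite /correct eqxx /= !andbF.
  by rewrite orbF andbT.
move=> ->; apply: sum_sub => [v|v /andP [-> _]//]; exact: w0.
Qed.
End Step.

Section Update.
Variables (V : finType) (e : rel V) (p : R) (v0 : V).
Local Open Scope ring_scope.

Lemma wt_rcons h q a v : wt e p (rcons h (q, a)) v =
  wt e p h v * (if correct e v q a then 1 - p else p).
Proof. by rewrite /wt big_rcons /= mulrC. Qed.

Lemma Y_rcons h t a : Yt e p (rcons h (query e p v0 h, a)) t =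
  p * Yt e p h t + (1 - 2 * p) * Xa e p v0 h t a.
Proof.
rewrite /Yt /Xa.
under eq_bigr => v _ do rewrite wt_rcons.
rewrite big_mkcondr /= mulr_sumr mulr_sumr -big_split /=.
apply: eq_bigr => v _; case: ifP => _; mring.
Qed.
End Update.

End M6.
Import M6.

Module M7.
Local Open Scope R_scope.

Lemma div_le_c x y c : 0 < y -> x <= c * y -> x / y <= c.
Proof.
intros Hy H. apply Rmult_le_reg_r with y; [Lra.lra|].
rewrite /Rdiv Rmult_assoc Rinv_l; Lra.lra.
Qed.

Section Main.
Variables (V : finType) (e : rel V).
Hypothesis esym : symmetric e.
Variables (p th : R) (v0 t : V).
Hypothesis Hp : 0 < p < 1/2.
Hypothesis Hth : 0 < th <= 1.
Hypothesis Ypos : forall h, 0 < Yt e p h t.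

Let p0 : (0 < p)%R. Proof. apply/RltP; have H : 0 < p by Lra.lra. exact H. Qed.
Let p1 : (p < 1)%R. Proof. apply/RltP; have H : p < 1 by Lra.lra. exact H. Qed.

Definition G h := Rpower (Yt e p h t / wt e p h t) th.

Lemma G_pos h : 0 < G h.
Proof. unfold G, Rpower; apply exp_pos. Qed.

Lemma wpos h v : 0 < wt e p h v.
Proof. apply/RltP; exact: wt_gt0. Qed.

Lemma Xnn h a : 0 <= Xa e p v0 h t a.
Proof.
apply/RleP; apply: Num.Theory.sumr_ge0 => v _; apply/RleP; left; apply: wpos.
Qed.

Lemma stepG h c l : correct e t (query e p v0 h) c ->
  (1 - p) * G (rcons h (query e p v0 h, c)) + p * G (rcons h (query e p v0 h, l))
  <= rho p th * G h.
Proof.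
move=> ct.
have [F1 F2] := Xfacts esym (v0:=v0) p0 p1 l ct.
set q := query e p v0 h in ct F1 F2 *.
set Y := Yt e p h t in F1 F2 *.
set w := wt e p h t.
set Xc := Xa e p v0 h t c in F1 F2 *.
set Xl := Xa e p v0 h t l in F2 *.
have F1' : Xc * 2 <= Y by apply/RleP.
have F2' : Xc + Xl <= Y by apply/RleP.
have HY : 0 < Y by apply: Ypos.
have Hw : 0 < w by apply: wpos.
have HXc : 0 <= Xc by apply: Xnn.
have HXl : 0 <= Xl by apply: Xnn.
have EYc : Yt e p (rcons h (q, c)) t = p * Y + (1 - 2 * p) * Xc := Y_rcons e p v0 h t c.
have EYl : Yt e p (rcons h (q, l)) t = p * Y + (1 - 2 * p) * Xl := Y_rcons e p v0 h t l.
have Ewc : wt e p (rcons h (q, c)) t = w * (1 - p).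
  by rewrite wt_rcons ct.
have [k [Ewl Hk]] : exists k, wt e p (rcons h (q, l)) t = w * k /\ p <= k <= 1 - p.
  rewrite wt_rcons; case: (correct e t q l) => /=; [exists (1 - p) | exists p]; split; try reflexivity; Lra.lra.
rewrite /G EYc EYl Ewc Ewl -/Y -/w.
set A := (p * Y + (1 - 2 * p) * Xc) / Y.
set B := (p * Y + (1 - 2 * p) * Xl) / Y.
have HA : 0 < A <= 1/2.
  rewrite /A; split; first by apply: Rdiv_lt_0_compat; Psatz.nra.
  apply: div_le_c => //; Psatz.nra.
have HB : 0 < B <= 1 - A.
  rewrite /A /B; split; first by apply: Rdiv_lt_0_compat; Psatz.nra.
  have -> : 1 - (p * Y + (1 - 2 * p) * Xc) / Y = (Y - (p * Y + (1 - 2 * p) * Xc)) / Y.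
    by field; Lra.lra.
  rewrite /Rdiv; apply: Rmult_le_compat_r; first by left; apply: Rinv_0_lt_compat.
  Psatz.nra.
have E1 : (p * Y + (1 - 2 * p) * Xc) / (w * (1 - p)) = (Y / w) * (A / (1 - p)).
  by rewrite /A; field; Lra.lra.
have L2 : (p * Y + (1 - 2 * p) * Xl) / (w * k) <= (Y / w) * (B / p).
  rewrite /B (_ : Y / w * ((p * Y + (1 - 2 * p) * Xl) / Y / p) =
                  (p * Y + (1 - 2 * p) * Xl) / (w * p)); last by field; Lra.lra.
  apply: Rmult_le_compat_l; first Psatz.nra.
  apply: Rinv_le_contravar; Psatz.nra.
have HYw : 0 < Y / w by apply: Rdiv_lt_0_compat.
rewrite E1 -Rpower_mult_distr //; last by apply: Rdiv_lt_0_compat; Lra.lra.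
have L2' : Rpower ((p * Y + (1 - 2 * p) * Xl) / (w * k)) th <= Rpower (Y / w) th * Rpower (B / p) th.
  rewrite Rpower_mult_distr //; last by apply: Rdiv_lt_0_compat; Lra.lra.
  apply: Rle_Rpower_l; first Lra.lra.
  split=> //; apply: Rdiv_lt_0_compat; Psatz.nra.
have S := step_num p th A B Hp Hth HA HB.
have GP : 0 < Rpower (Y / w) th by rewrite /Rpower; apply: exp_pos.
Psatz.nra.
Qed.

Definition ind h : R := ((outv e p v0 h == t)%:R)%R.

Lemma base h : 1 - G h <= ind h.
Proof.
rewrite /ind; case: eqP => [_|ne] /=.
  have := G_pos h; change (0 < G h -> 1 - G h <= 1); Lra.lra.
set o := outv e p v0 h in ne *.
have mx : (wt e p h t <= wt e p h o)%R.
  by rewrite /o /outv; case: Order.TotalTheory.arg_maxP => // i _; apply.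
have : (wt e p h o <= Yt e p h t)%R.
  rewrite /Yt (bigD1 o) /=; last by apply/eqP.
  rewrite Num.Theory.lerDl; apply: Num.Theory.sumr_ge0 => v _.
  by apply/RleP; left; apply: wpos.
move=> /RleP H2 /=; move/RleP: mx => H1.
have Hw := wpos h t.
have H3 : 1 <= Yt e p h t / wt e p h t.
  by apply: (Rmult_le_reg_r (wt e p h t)) => //; rewrite /Rdiv Rmult_assoc Rinv_l; Lra.lra.
have : Rpower (Yt e p h t / wt e p h t) 0 <= G h.
  by rewrite /G; apply: Rle_Rpower => //; Lra.lra.
rewrite Rpower_O; last Lra.lra.
change (1 <= G h -> 1 - G h <= 0); Lra.lra.
Qed.

Definition alg : algorithm V := Algorithm (query e p v0) (outv e p v0).

Lemma rho_pos : 0 < rho p th.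
Proof.
rewrite /rho /Rpower.
have := exp_pos (- th * ln (2 * (1 - p))); have := exp_pos (- th * ln (2 * p)). Psatz.nra.
Qed.

Lemma induct cor lie : valid_adversary e t cor lie -> forall m prev h,
  1 - rho p th ^ m * G h <= Esum p m (fun bs => ind (run_aux alg cor lie bs prev h)).
Proof.
move=> va; elim=> [|m IH] prev h /=.
  by rewrite Rmult_1_l; apply: base.
set q := query e p v0 h.
have [ct _] := va prev h q.
have S := stepG (lie prev h q) ct.
have IHc := IH (rcons prev false) (rcons h (q, cor prev h q)).
have IHl := IH (rcons prev true) (rcons h (q, lie prev h q)).
have Rm : 0 <= rho p th ^ m by apply: pow_le; left; apply: rho_pos.
set Ec := Esum _ _ _ in IHc. set El := Esum _ _ _ in IHl.
have -> : Esum p m (fun s => ind (run_aux alg cor lie (false :: s) prev h)) = Ec by [].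
have -> : Esum p m (fun s => ind (run_aux alg cor lie (true :: s) prev h)) = El by [].
rewrite -/q in S.
set Gc := G (rcons h (q, cor prev h q)) in S IHc.
set Gl := G (rcons h (q, lie prev h q)) in S IHl.
have H1 : (1 - p) * (1 - rho p th ^ m * Gc) <= (1 - p) * Ec by apply: Rmult_le_compat_l; Lra.lra.
have H2 : p * (1 - rho p th ^ m * Gl) <= p * El by apply: Rmult_le_compat_l; Lra.lra.
have H3 : rho p th ^ m * ((1 - p) * Gc + p * Gl) <= rho p th ^ m * (rho p th * G h).
  by apply: Rmult_le_compat_l.
Psatz.nra.
Qed.
End Main.

End M7.
Import M7.

Module M10.
Unset Implicit Arguments.
Local Open Scope R_scope.

Lemma rho_pos' p t : 0 < p < 1/2 -> 0 < rho p t.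
Proof.
intros Hp. unfold rho, Rpower.
pose proof (exp_pos (- t * ln (2 * (1 - p)))). pose proof (exp_pos (- t * ln (2 * p))). Psatz.nra.
Qed.

Lemma Inat_pos p : 0 < p < 1/2 -> 0 < Inat p.
Proof. intros Hp. pose proof (pinsker p Hp). Psatz.nra. Qed.

Lemma Inat_le1 p : 0 < p < 1/2 -> Inat p <= 1.
Proof.
intros Hp. unfold Inat.
pose proof (ln_le_sub1 (2 * (1 - p)) ltac:(Lra.lra)).
assert (ln (2 * p) < 0) by (rewrite -ln_1; apply ln_increasing; Lra.lra).
Psatz.nra.
Qed.

Lemma sqrt_facts D L : 0 < D -> 0 < L ->
  sqrt (D / L) * L = sqrt (L * D) /\ sqrt (D / L) * sqrt (L * D) = D.
Proof.
intros HD HL. split.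
- rewrite -{2}(sqrt_square L); [|Lra.lra].
  rewrite -sqrt_mult_alt; [|apply Rlt_le, Rdiv_lt_0_compat; Lra.lra].
  f_equal. field. Lra.lra.
- rewrite -sqrt_mult_alt; [|apply Rlt_le, Rdiv_lt_0_compat; Lra.lra].
  replace (D / L * (L * D)) with (D * D) by (field; Lra.lra).
  apply sqrt_square. Lra.lra.
Qed.

Lemma final_num p d L (T : nat) : 0 < p < 1/2 -> 0 < d < 1/2 -> 0 < L ->
  (L + 50 * sqrt (L * ln (/ d)) + 202 * ln (/ d)) / Inat p < INR T + 1 ->
  let th := Rmin (1/144) (sqrt (ln (/ d) / L)) in
  0 < th <= 1/2 /\ th * L + INR T * ln (rho p th) <= - ln (/ d).
Proof.
intros Hp Hd HL HT th.
set (D := ln (/ d)) in *.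
set (I := Inat p) in *.
set (s := sqrt (L * D)) in *.
assert (HD : / 2 < D).
{ unfold D. pose proof ln_lt_2. assert (ln 2 < ln (/ d)).
  { apply ln_increasing; [Lra.lra|]. apply Rmult_lt_reg_l with d; [Lra.lra|].
    rewrite Rinv_r; Lra.lra. }
  Lra.lra. }
assert (HI := Inat_pos p Hp). assert (HI1 := Inat_le1 p Hp). fold I in HI, HI1.
assert (Hs : 0 <= s) by apply sqrt_pos.
destruct (sqrt_facts D L ltac:(Lra.lra) HL) as [SF1 SF2]. fold s in SF1, SF2.
assert (Hq : 0 < sqrt (D / L)) by (apply sqrt_lt_R0, Rdiv_lt_0_compat; Lra.lra).
assert (Hth : 0 < th <= 1/144 /\ th <= sqrt (D / L)).
{ unfold th. split; [split|].
  - apply Rmin_glb_lt; Lra.lra.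
  - apply Rmin_l.
  - apply Rmin_r. }
assert (Hth2 : th * (3/2 * s + 150 * D) >= D).
{ unfold th. destruct (Rle_or_lt (1/144) (sqrt (D / L))) as [H|H].
  - rewrite Rmin_left; [Psatz.nra|Lra.lra].
  - rewrite Rmin_right; [Psatz.nra|Lra.lra]. }
split; [Lra.lra|].
assert (Rb := rho_bound p th Hp ltac:(Lra.lra)). fold I in Rb.
assert (Rp := rho_pos' p th Hp).
assert (Lr := ln_le_sub1 _ Rp).
assert (HTI : INR T * I >= L + 50 * s + 200 * D).
{ assert (INR T + 1 > (L + 50 * s + 202 * D) / I) by Lra.lra.
  assert ((INR T + 1) * I > L + 50 * s + 202 * D).
  { apply Rmult_lt_reg_r with (/ I); [apply Rinv_0_lt_compat; Lra.lra|].
    rewrite Rmult_assoc Rinv_r; Lra.lra. }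
  Psatz.nra. }
assert (HTn : 0 <= INR T) by apply pos_INR.
assert (K1 : INR T * ln (rho p th) <= - (INR T * I) * (th * (1 - 36 * th))).
{ assert (ln (rho p th) <= - I * (th * (1 - 36 * th))) by Psatz.nra. Psatz.nra. }
assert (K2 : th * th * L <= th * s).
{ rewrite -SF1. assert (th * L <= sqrt (D / L) * L) by Psatz.nra. Psatz.nra. }
assert (K3 : (INR T * I) * (th * (1 - 36 * th)) >= (L + 50 * s + 200 * D) * (th * (1 - 36 * th))).
{ apply Rmult_ge_compat_r; Psatz.nra. }
assert (K4 : th * (1 - 36 * th) * (50 * s + 200 * D) >= th * (3/4) * (50 * s + 200 * D)).
{ apply Rmult_ge_compat_r; [Psatz.nra|]. Psatz.nra. }
assert (E : (L + 50 * s + 200 * D) * (th * (1 - 36 * th)) =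
   th * L - 36 * (th * th * L) + th * (1 - 36 * th) * (50 * s + 200 * D)) by ring.
Lra.lra.
Qed.

Set Implicit Arguments.
End M10.
Import M10.

Module M11.
Local Open Scope R_scope.

Lemma Ypos_lem (V : finType) (e : rel V) p t : 0 < p < 1 -> (1 < #|V|)%N ->
  forall h, 0 < Yt e p h t.
Proof.
move=> Hp /card_gt1P [x [y [_ _ xy]]] h.
have [v vt] : exists v, v != t.
  by case: (eqVneq x t) => [xt|]; [exists y; rewrite -xt eq_sym | exists x].
have p0 : (0 < p)%R by apply/RltP; exact (proj1 Hp).
have p1 : (p < 1)%R by apply/RltP; exact (proj2 Hp).
apply/RltP; rewrite /Yt (bigD1 v) //=.
apply: Num.Theory.ltr_pwDl; first exact: wt_gt0.
by apply: Num.Theory.sumr_ge0 => i _; apply: Order.POrderTheory.ltW; apply: wt_gt0.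
Qed.

Lemma Gnil_le (V : finType) (e : rel V) p th t : 0 <= th -> 0 < Yt e p [::] t ->
  G e p th t [::] <= Rpower (INR #|V|) th.
Proof.
move=> Hth HY; rewrite /G.
have w1 : forall v, wt e p [::] v = 1 by move=> v; rewrite /wt big_nil.
rewrite w1 Rdiv_1_r; apply: Rle_Rpower_l => //; split => //.
have : (Yt e p [::] t <= #|V|%:R)%R.
  rewrite /Yt (eq_bigr (fun _ => 1%R)) // GRing.sumr_const Num.Theory.ler_nat.
  exact: max_card.
by rewrite INRE => /RleP.
Qed.

Lemma Icap_eq p : 0 < p < 1 -> Icap p = Inat p / ln 2.
Proof.
move=> Hp; have l2 := ln_lt_2.
rewrite /Icap /Hbin /log2 /Inat !ln_mult; try Lra.lra.
field; Lra.lra.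
Qed.

Lemma exists_floor r : 0 <= r -> exists T : nat, INR T <= r < INR T + 1.
Proof.
move=> Hr; have [H1 H2] := base_Int_part r.
have Hz : Z.le 0 (Int_part r).
  have H : IZR (Z.opp 1) < IZR (Int_part r) by rewrite opp_IZR; Lra.lra.
  move/lt_IZR: H; lia.
exists (Z.to_nat (Int_part r)).
rewrite INR_IZR_INZ Z2Nat.id //; Lra.lra.
Qed.


End M11.
Import M11.

Local Open Scope R_scope.

Theorem theorem1 :
  exists C1 C2 : R,
  forall (V : finType) (e : rel V),
    symmetric e -> irreflexive e -> (0 < #|V|)%N -> connected_graph e ->
  forall p delta : R, 0 < p < 1/2 -> 0 < delta < 1/2 ->
  exists (T : nat) (A : algorithm V),
    INR T <= / Icap p *
       (log2 (INR #|V|) + C1 * sqrt (ln (INR #|V|) * ln (/ delta))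
        + C2 * ln (/ delta)) /\
    forall (t : V) (cor lie : seq bool -> history V -> V -> answer V),
      valid_adversary e t cor lie ->
      success_prob p T A cor lie t >= 1 - delta.
Proof.
exists (50 / ln 2), (202 / ln 2).
move=> V e esym _ Vpos _ p d Hp Hd.
case/card_gt0P: (Vpos) => v0 _.
have Hp1 : 0 < p < 1 by Lra.lra.
have l2 := ln_lt_2.
have HI := Inat_pos p Hp.
have HD : 0 < ln (/ d).
  rewrite -ln_1; apply: ln_increasing; first Lra.lra.
  apply: (Rmult_lt_reg_l d); first Lra.lra.
  rewrite Rinv_r; Lra.lra.
case: (ltnP 1 #|V|) => n2.
- set L := ln (INR #|V|).
  have HL : 0 < L.
    rewrite /L -ln_1; apply: ln_increasing; first Lra.lra.
    by apply: (lt_INR 1); apply/ltP.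
  set D := ln (/ d) in HD *.
  set R0 := (L + 50 * sqrt (L * D) + 202 * D) / Inat p.
  have R0pos : 0 <= R0.
    have := sqrt_pos (L * D).
    move=> Hs; rewrite /R0; apply: Rlt_le; apply: Rdiv_lt_0_compat; Lra.lra.
  have [T [T1 T2]] := exists_floor R0pos.
  have [Hth FN] := final_num p d L T Hp Hd HL T2.
  set th := Rmin (1/144) (sqrt (D / L)) in Hth FN.
  exists T, (alg e p v0); split.
    have -> : / Icap p * (log2 (INR #|V|) + 50 / ln 2 * sqrt (L * D) + 202 / ln 2 * D) = R0.
      rewrite Icap_eq // /R0 /log2 -/L; field; Lra.lra.
    exact: T1.
  move=> t cor lie va.
  have Yp := Ypos_lem e t Hp1 n2.
  have Ind := induct esym v0 Hp (conj (proj1 Hth) (Rle_trans _ _ _ (proj2 Hth) (ltac:(Lra.lra) : 1/2 <= 1))) Yp va T [::] [::].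
  have -> : success_prob p T (alg e p v0) cor lie t =
     Esum p T (fun bs => ind e p v0 t (run_aux (alg e p v0) cor lie bs [::] [::])).
    by rewrite -tuple_sum.
  have Rp := rho_pos' p th Hp.
  have Gn := @Gnil_le V e p th t (Rlt_le _ _ (proj1 Hth)) (Yp [::]).
  have Gp := G_pos e p th t [::].
  have E1 : rho p th ^ T = exp (INR T * ln (rho p th)).
    by rewrite -Rpower_pow //.
  have E2 : Rpower (INR #|V|) th = exp (th * L) by [].
  have E3 : exp (- D) = d.
    by rewrite exp_Ropp /D exp_ln ?Rinv_inv //; apply: Rinv_0_lt_compat; Lra.lra.
  have K : rho p th ^ T * G e p th t [::] <= d.
    rewrite -E3 E1; apply: Rle_trans (_ : exp (INR T * ln (rho p th)) * exp (th * L) <= _).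
      apply: Rmult_le_compat_l; first by apply: Rlt_le; apply: exp_pos.
      by rewrite -E2.
    rewrite -exp_plus; apply: exp_le; rewrite /D; Lra.lra.
  apply: Rle_ge; Lra.lra.
- have n1 : #|V| = 1%N by apply/eqP; rewrite eqn_leq n2.
  exists 0%N, (alg e p v0); split.
    rewrite n1 /= /log2 ln_1 Rmult_0_l sqrt_0 /Rdiv Rmult_0_l Rmult_0_r !Rplus_0_l.
    rewrite Icap_eq //.
    apply: Rlt_le; apply: Rmult_lt_0_compat.
      apply: Rinv_0_lt_compat; apply: Rdiv_lt_0_compat; Lra.lra.
    apply: Rmult_lt_0_compat => //; apply: Rmult_lt_0_compat; first Lra.lra.
    by apply: Rinv_0_lt_compat; Lra.lra.
  move=> t cor lie va.
  have -> : success_prob p 0 (alg e p v0) cor lie t =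
     Esum p 0 (fun bs => ind e p v0 t (run_aux (alg e p v0) cor lie bs [::] [::])).
    by rewrite -tuple_sum.
  rewrite /= /ind.
  have -> : outv e p v0 [::] = t.
    have /card_le1P H : (#|V| <= 1)%N by rewrite n1.
    by move: (H (outv e p v0 [::]) isT t); rewrite !inE => E; apply/eqP; rewrite eq_sym -E.
  rewrite eqxx /=; apply: Rle_ge; change (1 - d <= 1); Lra.lra.
Qed.
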